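(* Let $X$ be a locale. A posheaf $F$ on $X$ is complete if and only if every $F(u)$ ($u\in\mathcal{O}(X)$) is a complete lattice and every restriction map $F(u)\to F(v)$ ($v\le u$) is surjective and preserves arbitrary joins and arbitrary meets; equivalently, $F$ is a sheaf with values in the category $SCL$ of complete lattices and surjective maps preserving arbitrary sups and arbitrary infs, satisfying condition (POS3).
   Context: Let $X$ be a locale with frame of opens $\mathcal{O}(X)$. A posheaf on $X$ is a sheaf of sets $F$ with (POS1) each $F(u)$ a poset; (POS2) restriction maps $F(u)\to F(v)$, $x\mapsto x|_v$ ($v\le u$), order-preserving; (POS3) if $u=\bigvee_i u_i$ and $s,t\in F(u)$ satisfy $s|_{u_i}\le t|_{u_i}$ for all $i$, then $s\le t$. A point of $F$ is a morphism $p:\hat1\to F$ with $\hat1$ a subsheaf of the terminal sheaf, identified with an element of $F(\mathrm{dom}(p))$ where $\mathrm{dom}(p)$ is the largest open $u$ with $\hat1(u)\ne\emptyset$; points are ordered by $p_1\le p_2$ iff $\mathrm{dom}(p_1)\le\mathrm{dom}(p_2)$ and $p_1\le p_2|_{\mathrm{dom}(p_1)}$. For $u\in\mathcal{O}(X)$, $F^u$ is the restriction of $F$ to $\downarrow u$. A downsheaf is a subsheaf $G$ with each $G(v)$ a down-set of $F(v)$; $\mathbb{D}F(u)$ is the set of downsheaves of $F^u$, ordered by inclusion, with restriction to smaller opens; $\downarrow:F\to\mathbb{D}F$ sends $z\in F(u)$ to the downsheaf $v\mapsto\{y\in F(v)\mid y\le z|_v\}$ ($v\le u$). For order-preserving $\alpha,\beta$,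 $\alpha\dashv\beta$ means $\alpha x\le y\iff x\le\beta y$ for all points. $F$ is complete if $\downarrow:F\to\mathbb{D}F$ has a left adjoint. *)

(* Defs.v *)
Set Implicit Arguments.
Unset Strict Implicit.

(* Frames.  A locale X is given by its frame of opens O(X).            *)
Record Frame := {
  opens :> Type;
  fle : opens -> opens -> Prop;
  fle_refl : forall a, fle a a;
  fle_trans : forall a b c, fle a b -> fle b c -> fle a c;
  fle_antisym : forall a b, fle a b -> fle b a -> a = b;
  fmeet : opens -> opens -> opens;
  fmeet_l : forall a b, fle (fmeet a b) a;
  fmeet_r : forall a b, fle (fmeet a b) b;
  fmeet_glb : forall a b c, fle c a -> fle c b -> fle c (fmeet a b);
  fsup : (opens -> Prop) -> opens;
  fsup_ub : forall (S : opens -> Prop) a, S a -> fle a (fsup S);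
  fsup_least : forall (S : opens -> Prop) b, (forall a, S a -> fle a b) -> fle (fsup S) b;
  fdistr : forall a (S : opens -> Prop),
    fmeet a (fsup S) = fsup (fun x => exists s, S s /\ x = fmeet a s)
}.
Arguments fle {_} _ _.
Arguments fmeet {_} _ _.
Arguments fsup {_} _.
Arguments fmeet_l {_} _ _.
Arguments fmeet_r {_} _ _.

Definition Locale := Frame.

Definition covers (X : Locale) (u : X) (I : Type) (ui : I -> X) : Prop :=
  u = fsup (fun x => exists i, x = ui i).

Record Presheaf (X : Locale) := {
  sec : X -> Type;
  res : forall u v : X, fle v u -> sec u -> sec v;
  res_pi : forall u v (h1 h2 : fle v u) x, res h1 x = res h2 x;
  res_id : forall u (h : fle u u) x, res h x = x;
  res_comp : forall u v w (h1 : fle v u) (h2 : fle w v) (h3 : fle w u) x,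
      res h2 (res h1 x) = res h3 x
}.
Arguments sec {X} _ u.
Arguments res {X} _ {u v} _ _.

Definition compatible (X : Locale) (F : Presheaf X) (I : Type) (ui : I -> X)
  (s : forall i, sec F (ui i)) : Prop :=
  forall i j, res F (fmeet_l (ui i) (ui j)) (s i) = res F (fmeet_r (ui i) (ui j)) (s j).

Definition is_sheaf (X : Locale) (F : Presheaf X) : Prop :=
  forall (u : X) (I : Type) (ui : I -> X) (hle : forall i, fle (ui i) u),
    covers u ui ->
    forall s : forall i, sec F (ui i), compatible s ->
    exists t : sec F u, (forall i, res F (hle i) t = s i) /\
      (forall t', (forall i, res F (hle i) t' = s i) -> t' = t).

Record Posheaf (X : Locale) := {
  psh :> Presheaf X;
  psh_sheaf : is_sheaf psh;
  ple : forall u : X, sec psh u -> sec psh u -> Prop;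
  ple_refl : forall u (x : sec psh u), ple x x;
  ple_trans : forall u (x y z : sec psh u), ple x y -> ple y z -> ple x z;
  ple_antisym : forall u (x y : sec psh u), ple x y -> ple y x -> x = y;
  res_mono : forall u v (h : fle v u) (x y : sec psh u),
      ple x y -> ple (res psh h x) (res psh h y);
  pos3 : forall (u : X) (I : Type) (ui : I -> X) (hle : forall i, fle (ui i) u),
    covers u ui -> forall s t : sec psh u,
    (forall i, ple (res psh (hle i) s) (res psh (hle i) t)) -> ple s t
}.
Arguments ple {X} _ {u} _ _.

Section PosheafNotions.
Variable X : Locale.
Variable F : Posheaf X.

(* Points of F: a point p : 1^ -> F (1^ a subterminal sheaf, i.e. 1^ = the
   representable of dom(p)) is identified with an element of F(dom p). *)
Definition ptleF (d1 : X) (x1 : sec F d1) (d2 : X) (x2 : sec F d2) : Prop :=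
  exists h : fle d1 d2, ple F x1 (res F h x2).

(* Downsheaves of F^u, represented by predicates G v on F(v); only the
   values at v <= u matter. *)
Definition is_downsheaf (u : X) (G : forall v : X, sec F v -> Prop) : Prop :=
  (forall v, fle v u -> forall x y : sec F v, G v y -> ple F x y -> G v x) /\
  (forall v w (hv : fle v u) (h : fle w v) (x : sec F v), G v x -> G w (res F h x)) /\
  (forall v (I : Type) (vi : I -> X) (hle : forall i, fle (vi i) v),
      fle v u -> covers v vi ->
      forall s : forall i, sec F (vi i), compatible s -> (forall i, G (vi i) (s i)) ->
      exists t : sec F v, G v t /\ forall i, res F (hle i) t = s i).

Definition ptleD (d1 : X) (G1 : forall v : X, sec F v -> Prop)
                 (d2 : X) (G2 : forall v : X, sec F v -> Prop) : Prop :=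
  fle d1 d2 /\ forall v, fle v d1 -> forall y, G1 v y -> G2 v y.

Definition down (u : X) (z : sec F u) : forall v : X, sec F v -> Prop :=
  fun v y => exists h : fle v u, ple F y (res F h z).

Definition is_left_adjoint_of_down
  (alpha : forall (u : X) (G : forall v : X, sec F v -> Prop), is_downsheaf u G -> sec F u)
  : Prop :=
  (forall u w (h : fle w u) G (pu : is_downsheaf u G) (pw : is_downsheaf w G),
      alpha w G pw = res F h (alpha u G pu)) /\
  (forall d1 G1 (p1 : is_downsheaf d1 G1) d2 G2 (p2 : is_downsheaf d2 G2),
      ptleD d1 G1 d2 G2 -> ptleF (alpha d1 G1 p1) (alpha d2 G2 p2)) /\
  (forall d1 G (p : is_downsheaf d1 G) d2 (x : sec F d2),
      ptleF (alpha d1 G p) x <-> ptleD d1 G d2 (down x)).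

Definition complete_posheaf : Prop :=
  exists alpha, is_left_adjoint_of_down alpha.

End PosheafNotions.

Definition is_lub (T : Type) (le : T -> T -> Prop) (S : T -> Prop) (s : T) : Prop :=
  (forall x, S x -> le x s) /\ (forall b, (forall x, S x -> le x b) -> le s b).

Definition is_glb (T : Type) (le : T -> T -> Prop) (S : T -> Prop) (s : T) : Prop :=
  (forall x, S x -> le s x) /\ (forall b, (forall x, S x -> le b x) -> le b s).

Definition complete_lattice (T : Type) (le : T -> T -> Prop) : Prop :=
  (forall S : T -> Prop, exists s, is_lub le S s) /\
  (forall S : T -> Prop, exists s, is_glb le S s).

Definition image (A B : Type) (f : A -> B) (S : A -> Prop) : B -> Prop :=
  fun y => exists x, S x /\ y = f x.

Definition preserves_sups (A B : Type) (leA : A -> A -> Prop) (leB : B -> B -> Prop)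
  (f : A -> B) : Prop :=
  forall (S : A -> Prop) s, is_lub leA S s -> is_lub leB (image f S) (f s).

Definition preserves_infs (A B : Type) (leA : A -> A -> Prop) (leB : B -> B -> Prop)
  (f : A -> B) : Prop :=
  forall (S : A -> Prop) s, is_glb leA S s -> is_glb leB (image f S) (f s).

Definition surjective (A B : Type) (f : A -> B) : Prop := forall y, exists x, f x = y.

(* Main.v *)
Require Import Defs.
From Stdlib Require Import IndefiniteDescription.
Set Implicit Arguments.
Unset Strict Implicit.

Section Gen.
Variable X : Locale.
Variable F : Posheaf X.

Lemma rcomp {u v w : X} (h1 : fle v u) (h2 : fle w v) (h3 : fle w u) (x : sec F u) :
  res F h2 (res F h1 x) = res F h3 x.
Proof. apply res_comp. Qed.
Lemma rpi {u v : X} (h1 h2 : fle v u) (x : sec F u) : res F h1 x = res F h2 x.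
Proof. apply res_pi. Qed.
Lemma rid {u : X} (h : fle u u) (x : sec F u) : res F h x = x.
Proof. apply res_id. Qed.

Lemma fsup_ext (P Q : X -> Prop) : (forall x, P x <-> Q x) -> fsup P = fsup Q.
Proof.
  intro H; apply fle_antisym; apply fsup_least; intros a Ha; apply fsup_ub; apply H; auto.
Qed.

Lemma covers_meet (v v' : X) I (vi : I -> X) :
  covers v' vi -> covers (fmeet v v') (fun i => fmeet v (vi i)).
Proof.
  unfold covers; intros H; rewrite H, fdistr. apply fsup_ext. intro x; split.
  - intros [s [[i ->] ->]]. exists i; auto.
  - intros [i ->]. exists (vi i); split; eauto.
Qed.

Lemma covers_single (w c : X) : fle w c -> fle c w -> covers w (fun _ : unit => c).
Proof.
  unfold covers; intros H1 H2. apply fle_antisym.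
  - eapply fle_trans; [exact H1|]. apply fsup_ub. exists tt; reflexivity.
  - apply fsup_least. intros a [_ ->]; auto.
Qed.

Lemma cover_le (v : X) I (vi : I -> X) d : covers v vi -> (forall i, fle (vi i) d) -> fle v d.
Proof. intros H Hi; rewrite H; apply fsup_least; intros a [i ->]; auto. Qed.

Lemma ds_mono u v G : @is_downsheaf X F u G -> fle v u -> @is_downsheaf X F v G.
Proof.
  intros [H1 [H2 H3]] hv; split; [|split].
  - intros w hw; apply H1; eapply fle_trans; eauto.
  - intros w w' hw h x; apply (H2 w w' (fle_trans hw hv)).
  - intros w I vi hle hw; apply (H3 w I vi hle (fle_trans hw hv)).
Qed.

Lemma down_ds u d (b : sec F d) : @is_downsheaf X F u (@down X F _ b).
Proof.
  split; [|split].
  - intros v _ x y [h Hy] Hxy. exists h. eapply ple_trans; eauto.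
  - intros v w _ h x [h' Hx]. exists (fle_trans h h').
    eapply ple_trans. apply (res_mono h), Hx. rewrite (rcomp h' h (fle_trans h h')). apply ple_refl.
  - intros v I vi hle _ cov s compat Hs.
    destruct (psh_sheaf hle cov compat) as [t [Ht _]].
    assert (hvd : fle v d).
    { apply (@cover_le v I vi d cov); intro i; destruct (Hs i) as [h _]; exact h. }
    exists t; split; [|exact Ht]. exists hvd. apply (pos3 (hle := hle) cov). intro i.
    rewrite Ht. destruct (Hs i) as [hi Hi]. rewrite (rcomp hvd (hle i) hi). exact Hi.
Qed.

Definition DS u (S : sec F u -> Prop) : forall v, sec F v -> Prop :=
  fun w y => forall K, @is_downsheaf X F u K -> (forall s, S s -> K u s) -> K w y.

Lemma DS_ds u (S : sec F u -> Prop) : @is_downsheaf X F u (DS S).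
Proof.
  split; [|split].
  - intros v hv x y Hy Hxy K pK hS. exact (proj1 pK v hv x y (Hy K pK hS) Hxy).
  - intros v w hv h x Hx K pK hS. exact (proj1 (proj2 pK) v w hv h x (Hx K pK hS)).
  - intros v I vi hle hv cov s compat Hs.
    destruct (psh_sheaf hle cov compat) as [t [Ht Hu]]. exists t; split; [|exact Ht].
    intros K pK hS.
    destruct (proj2 (proj2 pK) v I vi hle hv cov s compat (fun i => Hs i K pK hS)) as [t' [Kt' Ht']].
    rewrite <- (Hu t' Ht'). exact Kt'.
Qed.

Lemma Kb_ds u v (b : sec F v) :
  @is_downsheaf X F u (fun w y => ple F (res F (fmeet_r v w) y) (res F (fmeet_l v w) b)).
Proof.
  split; [|split].
  - intros w _ x y Hy Hxy. eapply ple_trans; [apply res_mono, Hxy| exact Hy].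
  - intros v' w _ h x Hx.
    pose (m := fmeet_glb (fmeet_l v w) (fle_trans (fmeet_r v w) h) : fle (fmeet v w) (fmeet v v')).
    rewrite (rcomp h (fmeet_r v w) (fle_trans (fmeet_r v w) h)).
    rewrite <- (rcomp (fmeet_r v v') m (fle_trans (fmeet_r v w) h)).
    rewrite <- (rcomp (fmeet_l v v') m (fmeet_l v w)). apply res_mono; exact Hx.
  - intros v' I vi hle _ cov s compat Hs.
    destruct (psh_sheaf hle cov compat) as [t [Ht _]]. exists t; split; [|exact Ht].
    pose (hle' := fun i => fmeet_glb (fmeet_l v (vi i)) (fle_trans (fmeet_r v (vi i)) (hle i))
                  : fle (fmeet v (vi i)) (fmeet v v')).
    apply (pos3 (hle := hle') (covers_meet v cov)). intro i.
    rewrite (rcomp (fmeet_r v v') (hle' i) (fle_trans (fmeet_r v (vi i)) (hle i))).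
    rewrite <- (rcomp (hle i) (fmeet_r v (vi i)) (fle_trans (fmeet_r v (vi i)) (hle i))).
    rewrite Ht. rewrite (rcomp (fmeet_l v v') (hle' i) (fmeet_l v (vi i))). apply Hs.
Qed.

Lemma lub_ext (T : Type) (le : T -> T -> Prop) S S' s :
  (forall x, S x <-> S' x) -> is_lub le S s -> is_lub le S' s.
Proof.
  intros H [H1 H2]; split.
  - intros x Hx; apply H1, H, Hx.
  - intros b Hb; apply H2; intros x Hx; apply Hb, H, Hx.
Qed.

Lemma glb_of_lubs (T : Type) (le : T -> T -> Prop) :
  (forall S : T -> Prop, exists s, is_lub le S s) ->
  (forall S : T -> Prop, exists s, is_glb le S s).
Proof.
  intros H S. destruct (H (fun x => forall s, S s -> le x s)) as [g [G1 G2]].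
  exists g; split.
  - intros x Hx; apply G2; intros y Hy; auto.
  - intros b Hb; apply G1; auto.
Qed.

Lemma lub_unique u (S : sec F u -> Prop) s s' :
  is_lub (ple F) S s -> is_lub (ple F) S s' -> s = s'.
Proof.
  intros [A1 A2] [B1 B2]; apply ple_antisym; [apply A2, B1 | apply B2, A1].
Qed.

Lemma glb_unique u (S : sec F u -> Prop) s s' :
  is_glb (ple F) S s -> is_glb (ple F) S s' -> s = s'.
Proof.
  intros [A1 A2] [B1 B2]; apply ple_antisym; [apply B2, A1 | apply A2, B1].
Qed.

Section Fwd.
Unset Implicit Arguments.
Variable alpha : forall (u : X) (G : forall v : X, sec F v -> Prop), @is_downsheaf X F u G -> sec F u.
Hypothesis Ha : is_left_adjoint_of_down alpha.
Set Implicit Arguments.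

Lemma a_ub u G (p : @is_downsheaf X F u G) v (hv : fle v u) y :
  G v y -> ple F y (res F hv (alpha u G p)).
Proof.
  intro Gy. destruct Ha as [_ [_ A]]. destruct (A u G p u (alpha u G p)) as [A1 _].
  destruct A1 as [_ H].
  - exists (fle_refl u). rewrite rid. apply ple_refl.
  - destruct (H v hv y Gy) as [h' Hy]. rewrite (rpi hv h'); exact Hy.
Qed.

Lemma a_least u G p (x : sec F u) :
  (forall v (hv : fle v u) y, G v y -> ple F y (res F hv x)) -> ple F (alpha u G p) x.
Proof.
  intro H. destruct Ha as [_ [_ A]]. destruct (A u G p u x) as [_ A2].
  destruct A2 as [h Hh].
  - split. apply fle_refl. intros v hv y Gy. exists hv. apply H; auto.
  - rewrite rid in Hh. exact Hh.
Qed.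

Lemma a_down d (b : sec F d) (p : @is_downsheaf X F d (@down X F _ b)) : alpha d (@down X F _ b) p = b.
Proof.
  apply ple_antisym.
  - apply a_least. intros v hv y [h Hy]. rewrite (rpi hv h); auto.
  - pose proof (a_ub p (fle_refl d) (y := b)) as H. rewrite rid in H. apply H.
    exists (fle_refl d); rewrite rid; apply ple_refl.
Qed.

Lemma DS_lub u (S : sec F u -> Prop) v (hv : fle v u) (pv : @is_downsheaf X F v (DS S)) :
  is_lub (ple F) (image (res F hv) S) (alpha v (DS S) pv).
Proof.
  split.
  - intros x [s' [Hs ->]]. pose proof (a_ub pv (fle_refl v) (y := res F hv s')) as H.
    rewrite rid in H. apply H. intros K pK hS.
    apply (proj1 (proj2 pK) u v (fle_refl u) hv s' (hS s' Hs)).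
  - intros b Hb. apply a_least. intros w hw y Dy.
    assert (Kbase : forall s, S s -> ple F (res F (fmeet_r v u) s) (res F (fmeet_l v u) b)).
    { intros s Hs. rewrite <- (rcomp hv (fmeet_l v u) (fmeet_r v u)). apply res_mono.
      apply Hb. exists s; auto. }
    pose proof (Dy _ (Kb_ds u b) Kbase) as Ky. simpl in Ky.
    apply (pos3 (hle := fun _ => fmeet_r v w)
             (covers_single (fmeet_glb hw (fle_refl w)) (fmeet_r v w))).
    intros _. rewrite (rcomp hw (fmeet_r v w) (fmeet_l v w)). exact Ky.
Qed.

Lemma fwd : (forall u : X, complete_lattice (@ple X F u)) /\
   (forall (u v : X) (h : fle v u),
      surjective (res F h) /\
      preserves_sups (@ple X F u) (@ple X F v) (res F h) /\
      preserves_infs (@ple X F u) (@ple X F v) (res F h)).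
Proof.
  assert (HL : forall u (S : sec F u -> Prop), is_lub (ple F) S (alpha u (DS S) (DS_ds S))).
  { intros u S. eapply lub_ext; [|apply (DS_lub (fle_refl u))].
    intro x; split.
    - intros [s [Hs ->]]. rewrite rid; auto.
    - intros Hx. exists x. rewrite rid; auto. }
  destruct Ha as [N _].
  split.
  - intro u. split.
    + intro S. eexists; apply HL.
    + apply glb_of_lubs. intro S. eexists; apply HL.
  - intros u v hv. split; [|split].
    + intro y. exists (alpha u (@down X F _ y) (down_ds u y)).
      rewrite <- (N u v hv _ _ (down_ds v y)). apply a_down.
    + intros S s Hs. rewrite (lub_unique Hs (HL u S)).
      rewrite <- (N u v hv _ _ (ds_mono (DS_ds S) hv)). apply DS_lub.
    + intros S s [Hs1 Hs2]. split.
      * intros x [s' [Hs' ->]]. apply res_mono; auto.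
      * intros b Hb.
        assert (E : res F hv (alpha u (@down X F _ b) (down_ds u b)) = b).
        { rewrite <- (N u v hv _ _ (down_ds v b)). apply a_down. }
        rewrite <- E. apply res_mono. apply Hs2. intros s' Hs'. apply a_least.
        intros w hw y [h Hy]. eapply ple_trans; [exact Hy|].
        rewrite <- (rcomp hv h hw). apply res_mono. apply Hb. exists s'; auto.
Qed.

End Fwd.

Section Bwd.
Hypothesis HC : forall u : X, complete_lattice (@ple X F u).
Hypothesis HR : forall (u v : X) (h : fle v u),
      surjective (res F h) /\
      preserves_sups (@ple X F u) (@ple X F v) (res F h) /\
      preserves_infs (@ple X F u) (@ple X F v) (res F h).

Definition glbF u (S : sec F u -> Prop) : sec F u :=
  proj1_sig (constructive_indefinite_description _ (proj2 (HC u) S)).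
Lemma glbF_spec u (S : sec F u -> Prop) : is_glb (ple F) S (glbF S).
Proof. unfold glbF; destruct constructive_indefinite_description; auto. Qed.
Definition lubF u (S : sec F u -> Prop) : sec F u :=
  proj1_sig (constructive_indefinite_description _ (proj1 (HC u) S)).
Lemma lubF_spec u (S : sec F u -> Prop) : is_lub (ple F) S (lubF S).
Proof. unfold lubF; destruct constructive_indefinite_description; auto. Qed.

Unset Implicit Arguments.
Definition UU (u : X) (G : forall v : X, sec F v -> Prop) : sec F u -> Prop :=
  fun z => forall w (h : fle w u) y, G w y -> ple F y (res F h z).

Definition alphaB (u : X) (G : forall v : X, sec F v -> Prop) (_ : @is_downsheaf X F u G) : sec F u :=
  glbF (UU u G).
Set Implicit Arguments.

Lemma alpha_in_U (u : X) (G : forall v : X, sec F v -> Prop) w (h : fle w u) y :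
  G w y -> ple F y (res F h (glbF (UU u G))).
Proof.
  intros Gy. destruct (HR h) as [_ [_ Hi]].
  destruct (Hi _ _ (glbF_spec (UU u G))) as [_ H2]. apply H2.
  intros x [z [Hz ->]]. apply Hz; auto.
Qed.

Lemma alpha_least u G z : UU u G z -> ple F (glbF (UU u G)) z.
Proof. intro Hz. apply (proj1 (glbF_spec (UU u G))); auto. Qed.

Lemma adjB d1 G (p : @is_downsheaf X F d1 G) d2 (x : sec F d2) :
  ptleF (alphaB d1 G p) x <-> ptleD d1 G d2 (@down X F _ x).
Proof.
  unfold alphaB. split.
  - intros [h Hh]. split; [exact h|]. intros v hv y Gy.
    exists (fle_trans hv h). eapply ple_trans; [apply (@alpha_in_U d1 G v hv y Gy)|].
    rewrite <- (rcomp h hv (fle_trans hv h)). apply res_mono; exact Hh.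
  - intros [h Hh]. exists h. apply alpha_least. intros w hw y Gy.
    destruct (Hh w hw y Gy) as [h' Hy]. rewrite (rcomp h hw h'). exact Hy.
Qed.

Lemma ext_lemma u w (h : fle w u) G (pu : @is_downsheaf X F u G) (a : sec F w)
  (Ha : UU w G a) w' (h' : fle w' u) y (Gy : G w' y) :
  exists n : sec F u, ple F (res F h n) a /\ res F h' n = y.
Proof.
  set (c := fmeet w w').
  set (ry := res F (fmeet_r w w') y).
  assert (Gc : G c ry) by (apply (proj1 (proj2 pu) w' c h' (fmeet_r w w') y Gy)).
  assert (Hra : ple F ry (res F (fmeet_l w w') a)) by (apply Ha; exact Gc).
  destruct (HR (fmeet_l w w')) as [Hsurj [_ Hinf]].
  destruct (Hsurj ry) as [s Hs].
  set (a' := glbF (fun x : sec F w => x = a \/ x = s)).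
  assert (Ha' : res F (fmeet_l w w') a' = ry).
  { apply (glb_unique (Hinf _ _ (glbF_spec (fun x : sec F w => x = a \/ x = s)))).
    split.
    - intros x [x0 [[-> | ->] ->]]; [exact Hra| rewrite Hs; apply ple_refl].
    - intros b Hb. rewrite <- Hs. apply Hb. exists s; auto. }
  assert (Haa : ple F a' a) by (apply (proj1 (glbF_spec _)); auto).
  set (ui := fun i : bool => if i then w else w').
  set (p := fsup (fun x => exists i, x = ui i)).
  assert (hle : forall i, fle (ui i) p) by (intro i; apply fsup_ub; exists i; reflexivity).
  set (sf := fun i : bool => match i return sec F (ui i) with true => a' | false => y end).
  assert (gen : forall c' (k1 : fle c' w) (k2 : fle c' w'), res F k1 a' = res F k2 y).
  { intros c' k1 k2. set (m := fmeet_glb k1 k2 : fle c' c).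
    rewrite <- (rcomp (fmeet_l w w') m k1). rewrite Ha'. unfold ry.
    apply rcomp. }
  assert (compat : compatible (F:=F) (ui:=ui) sf).
  { intros [|] [|]; simpl.
    - apply rpi.
    - apply gen.
    - symmetry; apply gen.
    - apply rpi. }
  destruct (psh_sheaf hle (eq_refl p) compat) as [t [Ht _]].
  assert (hpu : fle p u).
  { apply fsup_least. intros a0 [[|] ->]; simpl; assumption. }
  destruct (proj1 (HR hpu) t) as [n Hn].
  exists n; split.
  - rewrite <- (rcomp hpu (hle true) h). rewrite Hn, (Ht true). exact Haa.
  - rewrite <- (rcomp hpu (hle false) h'). rewrite Hn, (Ht false). reflexivity.
Qed.

Lemma natB u w (h : fle w u) G (pu : @is_downsheaf X F u G) (pw : @is_downsheaf X F w G) :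
  alphaB w G pw = res F h (alphaB u G pu).
Proof.
  unfold alphaB. apply ple_antisym.
  - apply alpha_least. intros w' h' y Gy.
    rewrite (rcomp h h' (fle_trans h' h)). apply alpha_in_U; auto.
  - set (a := glbF (UU w G)).
    set (Z := fun z' : sec F u => ple F (res F h z') a).
    assert (Hz : ple F (res F h (lubF Z)) a).
    { destruct (HR h) as [_ [Hsup _]]. apply (proj2 (Hsup _ _ (lubF_spec Z))).
      intros x [z [Hz ->]]. exact Hz. }
    eapply ple_trans; [|exact Hz]. apply res_mono. apply alpha_least.
    intros w' h' y Gy.
    destruct (ext_lemma h pu (fun w0 h0 y0 => @alpha_in_U w G w0 h0 y0) h' Gy) as [n [Hn1 Hn2]].
    rewrite <- Hn2. apply res_mono. apply (proj1 (lubF_spec Z)). exact Hn1.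
Qed.

Lemma bwd : complete_posheaf F.
Proof.
  exists alphaB. split; [|split].
  - intros. apply natB.
  - intros d1 G1 p1 d2 G2 p2 [h H]. apply (proj2 (adjB p1 _)).
    split; [exact h|]. intros v hv y Gy. exists (fle_trans hv h).
    unfold alphaB. apply alpha_in_U. apply H; auto.
  - intros. apply adjB.
Qed.
End Bwd.
End Gen.

Theorem corollary3p2 (X : Locale) (F : Posheaf X) :
  complete_posheaf F <->
  ((forall u : X, complete_lattice (@ple X F u)) /\
   (forall (u v : X) (h : fle v u),
      surjective (res F h) /\
      preserves_sups (@ple X F u) (@ple X F v) (res F h) /\
      preserves_infs (@ple X F u) (@ple X F v) (res F h))).
Proof.
  split.
  - intros [alpha Ha]. exact (fwd Ha).
  - intros [HC HR]. exact (bwd HC HR).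
Qed.
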